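(* Let $G$ be a connected weighted undirected graph on the vertex set $\{1,\dots,n\}$ with symmetric weighted adjacency matrix $W=(w_{ij})$ (where $w_{ij}>0$ is the weight of edge $(i,j)$ if $i\sim j$ and $w_{ij}=0$ otherwise), degree matrix $D=\operatorname{Diag}(W\mathbf 1)$ with diagonal entries $d_i$, and Laplacian $L=D-W$. Consider the matrices (i) $K^{\mathrm{absorp}}(t)=[tA+L]^{-1}$, where $t>0$ and $A=\operatorname{Diag}(a_1,\dots,a_n)$ with all $a_i>0$; (ii) $K^{\mathrm{PPR}}(\alpha)=[I-\alpha P]^{-1}$, where $P=D^{-1}W$ and $0<\alpha<1$; (iii) $K^{\mathrm{modifPPR}}(\alpha)=[D-\alpha W]^{-1}$, where $0<\alpha<1$. Then each of these matrices $S=(s_{ij})$ produces a transitional measure on $G$.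
   Context: A matrix $S=(s_{ij})$ indexed by the vertices of $G$ produces a transitional measure on $G$ if for all vertices $i,j,k$ one has $s_{ij}\,s_{jk}\le s_{ik}\,s_{jj}$, and moreover $s_{ij}\,s_{jk}=s_{ik}\,s_{jj}$ holds if and only if every path in $G$ from $i$ to $k$ visits $j$. *)

(* Defs.v *)
From HB Require Import structures.
From mathcomp Require Import all_boot all_order all_algebra.
Set Implicit Arguments. Unset Strict Implicit. Unset Printing Implicit Defensive.
Import Order.TTheory GRing.Theory Num.Theory.
Local Open Scope ring_scope.

Definition weighted_graph (R : realFieldType) (n : nat) (W : 'M[R]_n) : Prop :=
  (forall i j, W i j = W j i) /\ (forall i j, 0 <= W i j) /\ (forall i, W i i = 0).

Definition adj (R : realFieldType) (n : nat) (W : 'M[R]_n) : rel 'I_n :=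
  fun i j => 0 < W i j.

Definition connected_graph (R : realFieldType) (n : nat) (W : 'M[R]_n) : Prop :=
  forall i j : 'I_n, connect (adj W) i j.

Definition degmx (R : realFieldType) (n : nat) (W : 'M[R]_n) : 'M[R]_n :=
  diag_mx (\row_i \sum_j W i j).

Definition laplacian (R : realFieldType) (n : nat) (W : 'M[R]_n) : 'M[R]_n :=
  degmx W - W.

Definition every_path_visits (R : realFieldType) (n : nat) (W : 'M[R]_n)
  (i j k : 'I_n) : Prop :=
  forall p : seq 'I_n, path (adj W) i p -> last i p = k -> j \in i :: p.

Definition transitional_measure (R : realFieldType) (n : nat) (W : 'M[R]_n)
  (S : 'M[R]_n) : Prop :=
  forall i j k : 'I_n,
    S i j * S j k <= S i k * S j j /\
    (S i j * S j k = S i k * S j j <-> every_path_visits W i j k).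

Definition K_absorp (R : realFieldType) (n : nat) (W : 'M[R]_n)
  (a : 'I_n -> R) (t : R) : 'M[R]_n :=
  invmx (t *: diag_mx (\row_i a i) + laplacian W).

Definition K_PPR (R : realFieldType) (n : nat) (W : 'M[R]_n) (alpha : R) : 'M[R]_n :=
  invmx (1%:M - alpha *: (invmx (degmx W) *m W)).

Definition K_modifPPR (R : realFieldType) (n : nat) (W : 'M[R]_n) (alpha : R) : 'M[R]_n :=
  invmx (degmx W - alpha *: W).

(* Main.v *)
From HB Require Import structures.
From mathcomp Require Import all_boot all_order all_algebra.
From mathcomp Require Import ring lra.
Require Import Defs.
Set Implicit Arguments. Unset Strict Implicit. Unset Printing Implicit Defensive.
Import Order.TTheory GRing.Theory Num.Theory.
Local Open Scope ring_scope.

Section Core.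
Variables (R : realFieldType) (n : nat) (M : 'M[R]_n).
Hypothesis Hoff : forall m l, m != l -> M m l <= 0.
Hypothesis Hcol : forall l, 0 < \sum_m M m l.

Lemma minp (g : 'I_n -> R) :
  (forall l, g l < 0 -> 0 <= \sum_m g m * M m l) -> forall l, 0 <= g l.
Proof.
move=> Hg l; case: (@arg_minP _ R _ l xpredT g isT) => l0 _ Hmin.
rewrite leNgt; apply/negP => Hl.
have H0 : g l0 < 0 by apply: le_lt_trans (Hmin l isT) Hl.
have H1 := Hg _ H0.
have H2 : \sum_m g m * M m l0 <= \sum_m g l0 * M m l0.
  apply: ler_sum => m _; case: (eqVneq m l0) => [->//|ne].
  by apply: ler_wnM2r; [exact: Hoff | exact: Hmin].
rewrite -mulr_sumr in H2.
have := Hcol l0; move: H1 H2; set s := \sum__ _; nra.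
Qed.

Lemma diag_pos l : 0 < M l l.
Proof.
have := Hcol l; rewrite (bigD1 l) //=.
have : \sum_(m | m != l) M m l <= 0 by apply: sumr_le0 => m; exact: Hoff.
lra.
Qed.

Lemma unitM : M \in unitmx.
Proof.
rewrite unitmxE unitfE; apply/negP => /det0P [v vn0 vM].
have Hz l : \sum_m v 0 m * M m l = 0.
  by have := congr1 (fun A : 'M[R]_(1,n) => A 0 l) vM; rewrite !mxE.
have P1 := minp (g := fun m => v 0 m) (fun l _ => ltac:(by rewrite Hz)).
have P2 : forall l, 0 <= - v 0 l.
  apply: minp => l _.
  under eq_bigr do rewrite mulNr.
  by rewrite sumrN Hz oppr0.
move/eqP: vn0; apply; apply/matrixP => i j; rewrite mxE.
rewrite (ord1 i); have := P1 j; have := P2 j; lra.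
Qed.

Variable W : 'M[R]_n.
Hypothesis Hadj : forall m l, m != l -> (M m l < 0) = adj W m l.

Let S := invmx M.

Lemma SM i l : \sum_m S i m * M m l = (i == l)%:R.
Proof. by have := congr1 (fun A : 'M[R]_n => A i l) (mulVmx unitM); rewrite !mxE. Qed.

Lemma Sjj_pos j : 0 < S j j.
Proof.
have P := minp (g := fun m => S j m) (fun l _ => ltac:(by rewrite SM ler0n)).
have := SM j j; rewrite eqxx (bigD1 j) //=.
have : \sum_(m | m != j) S j m * M m j <= 0.
  by apply: sumr_le0 => m mj; apply: mulr_ge0_le0; [exact: P | exact: Hoff].
have := diag_pos j; have := P j; nra.
Qed.

Section Fix.
Variables i j : 'I_n.
Let f m := S j j * S i m - S i j * S j m.

Lemma fM l : \sum_m f m * M m l = S j j * (i == l)%:R - S i j * (j == l)%:R.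
Proof.
rewrite /f; under eq_bigr do rewrite mulrBl -!mulrA.
by rewrite sumrB -!mulr_sumr !SM.
Qed.

Lemma fj : f j = 0.
Proof. by rewrite /f mulrC subrr. Qed.

Lemma f_ge0 l : 0 <= f l.
Proof.
apply: minp => l' Hl'; rewrite fM.
case: (eqVneq j l') => [E|ne]; first by rewrite -E fj ltxx in Hl'.
rewrite mulr0n mulr0 subr0; apply: mulr_ge0; last by case: (i == l').
exact: ltW (Sjj_pos j). Qed.

Lemma zero_closed y x : f y = 0 -> y != i -> y != j -> x != y -> M x y < 0 -> f x = 0.
Proof.
move=> fy yi yj xy Mxy.
have E : \sum_m f m * M m y = 0.
  by rewrite fM eq_sym (negPf yi) eq_sym (negPf yj) !mulr0n !mulr0 subr0.
have E' : \sum_m - (f m * M m y) = 0 by rewrite sumrN E oppr0.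
have Hnn : forall m, xpredT m -> 0 <= - (f m * M m y).
  move=> m _; rewrite oppr_ge0.
  case: (eqVneq m y) => [->|my]; first by rewrite fy mul0r.
  by apply: mulr_ge0_le0; [exact: f_ge0 | exact: Hoff].
have := psumr_eq0P Hnn E' (i := x) isT.
move/eqP; rewrite oppr_eq0 mulf_eq0 => /orP [/eqP //|/eqP Me].
by rewrite Me ltxx in Mxy.
Qed.

Hypothesis ij : i != j.

Lemma fi_pos : 0 < f i.
Proof.
have := fM i; rewrite eqxx eq_sym (negPf ij) mulr0 subr0 mulr1 => E.
rewrite lt_neqAle f_ge0 andbT; apply/eqP => fi0.
have : \sum_m f m * M m i <= 0.
  apply: sumr_le0 => m _; case: (eqVneq m i) => [->|mi]; first by rewrite -fi0 mul0r.
  by apply: mulr_ge0_le0; [exact: f_ge0 | exact: Hoff].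
rewrite E; have := Sjj_pos j; lra.
Qed.

Lemma prop p x : 0 < f x -> path (adj W) x p -> j \notin p -> 0 < f (last x p).
Proof.
elim: p x => [|y p IH] x //= fx /andP[axy pp]; rewrite inE negb_or => /andP[jy jp].
apply: IH => //.
rewrite lt_neqAle f_ge0 andbT; apply/eqP => fy0.
case: (eqVneq x y) => [xy|xy]; first by rewrite xy -fy0 ltxx in fx.
have yi : y != i by apply/eqP => yi; move: fi_pos; rewrite -yi -fy0 ltxx.
have := zero_closed (esym fy0) yi (ltac:(by rewrite eq_sym)) xy.
rewrite Hadj // => /(_ axy) fx0; by rewrite fx0 ltxx in fx.
Qed.

Let adj' := [rel x y | adj W x y && (y != j)].

Lemma avoid p x : path adj' x p -> j \notin p.
Proof.
elim: p x => [|y p IH] x //= /andP[/andP[_ yj] pp].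
by rewrite inE negb_or eq_sym yj (IH y pp).
Qed.

Lemma far k : ~~ connect adj' i k -> f k = 0.
Proof.
move=> nk.
pose h m := if connect adj' i m then 0 else f m.
suff H : forall l, 0 <= - h l.
  by have := H k; rewrite /h (negPf nk); have := f_ge0 k; lra.
apply: minp => l Hl.
have cl : ~~ connect adj' i l by apply/negP => c; move: Hl; rewrite /h c oppr0 ltxx.
have fl : 0 < f l by move: Hl; rewrite /h (negPf cl); lra.
have lj : j != l by apply/eqP => E; move: fl; rewrite -E fj ltxx.
have li : i != l by apply/eqP => E; move: cl; rewrite -E connect0.
have E : \sum_m h m * M m l = \sum_m f m * M m l.
  apply: eq_bigr => m _; rewrite /h; case: ifP => // cm.
  have ml : m != l by apply/eqP => E; move: cl; rewrite -E cm.
  suff -> : M m l = 0 by rewrite !mulr0.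
  apply/eqP; rewrite eq_le Hoff //= leNgt; apply/negP => Mlt.
  move: cl; rewrite (connect_trans cm) //; apply: connect1 => /=.
  by rewrite -Hadj // Mlt eq_sym lj.
under eq_bigr do rewrite mulNr.
by rewrite sumrN E fM (negPf li) (negPf lj) !mulr0 subr0 oppr0.
Qed.

Lemma visits_nc k : every_path_visits W i j k -> ~~ connect adj' i k.
Proof.
move=> V; apply/negP => /connectP [p pp kp].
have pp' : path (adj W) i p by apply: sub_path pp => x y /andP[].
have := V p pp' (esym kp); rewrite inE eq_sym (negPf ij) /=.
by rewrite (negPf (avoid pp)).
Qed.

End Fix.

Lemma core : transitional_measure W S.
Proof.
move=> i j k; have F := f_ge0 i j k; rewrite /= in F.
split; first by lra.
split.
- case: (eqVneq i j) => [<-|ij]; first by move=> _ p _ _; rewrite mem_head.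
  move=> Heq p pp lp; apply/negPn/negP; rewrite inE negb_or eq_sym => /andP[_ jp].
  have := prop ij (fi_pos ij) pp jp; rewrite lp; lra.
- case: (eqVneq i j) => [<-|ij]; first by move=> _; rewrite mulrC.
  move=> V; have := far (visits_nc ij V); lra.
Qed.

End Core.

Section Inst.
Variables (R : realFieldType) (n : nat) (W : 'M[R]_n).
Hypothesis HW : weighted_graph W.
Hypothesis HC : connected_graph W.

Lemma sum_delta (c : 'I_n -> R) l : \sum_m (c m *+ (m == l)) = c l.
Proof.
rewrite (bigD1 l) //= eqxx mulr1n big1 ?addr0 // => m ml.
by rewrite (negPf ml) mulr0n.
Qed.

Lemma M_form (M : 'M[R]_n) (c : 'I_n -> R) (beta : R) :
  0 < beta -> (forall m l, M m l = c m *+ (m == l) - beta * W m l) ->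
  (forall l, 0 < c l - beta * \sum_m W l m) ->
  transitional_measure W (invmx M).
Proof.
case: HW => Hsym [Hge0 _] bp HM Hc.
apply: core.
- move=> m l ml; rewrite HM (negPf ml) mulr0n sub0r oppr_le0.
  by apply: mulr_ge0; [exact: ltW | exact: Hge0].
- move=> l; under eq_bigr do rewrite HM.
  rewrite sumrB sum_delta -mulr_sumr.
  by under eq_bigr do rewrite Hsym.
- move=> m l ml; rewrite HM (negPf ml) mulr0n sub0r oppr_lt0.
  by rewrite pmulr_rgt0.
Qed.

Lemma trivialS (S : 'M[R]_n) : (forall x y : 'I_n, x = y) -> transitional_measure W S.
Proof.
move=> H i j k; have <- := H i j; have <- := H i k.
split; first exact: lexx.
by split=> // _ p _ _; rewrite mem_head.
Qed.

Lemma scaleS (S : 'M[R]_n) (c : 'I_n -> R) :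
  transitional_measure W S -> (forall j, 0 < c j) ->
  transitional_measure W (\matrix_(i, j) (S i j * c j)).
Proof.
move=> H Hc i j k; rewrite !mxE; have [H1 H2] := H i j k.
have p0 : 0 < c j * c k by rewrite mulr_gt0.
have E1 : S i j * c j * (S j k * c k) = (S i j * S j k) * (c j * c k) by ring.
have E2 : S i k * c k * (S j j * c j) = (S i k * S j j) * (c j * c k) by ring.
rewrite E1 E2 ler_pM2r //; split => //.
rewrite -H2; split; last by move->.
by apply: mulIf; rewrite gt_eqF.
Qed.

Lemma deg_pos : (exists x y : 'I_n, x != y) -> forall l, 0 < \sum_m W l m.
Proof.
case: HW => Hsym [Hge0 _] [x [y xy]] l.
have [z zl] : exists z, z != l.
  case: (eqVneq x l) => [E|xl]; last by exists x.
  by exists y; rewrite -E eq_sym.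
have := HC l z; case/connectP => [[|w p]] /=.
  by move=> _ E; rewrite E eqxx in zl.
case/andP => alw _ _; rewrite /adj in alw.
rewrite (bigD1 w) //=.
have : 0 <= \sum_(m | m != w) W l m by apply: sumr_ge0 => m _; exact: Hge0.
lra.
Qed.

Lemma dichot : (exists x y : 'I_n, x != y) \/ (forall x y : 'I_n, x = y).
Proof.
case: (boolP [exists x : 'I_n, exists y : 'I_n, x != y]) => [/existsP [x /existsP [y xy]]|nex].
  by left; exists x, y.
right => x y; apply/eqP/negPn/negP => H; move/negP: nex; apply.
by apply/existsP; exists x; apply/existsP; exists y.
Qed.

Lemma degE m l : degmx W m l = (\sum_j W m j) *+ (m == l).
Proof. by rewrite /degmx !mxE. Qed.

Lemma absorp_ok t a : 0 < t -> (forall i, 0 < a i) ->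
  transitional_measure W (K_absorp W a t).
Proof.
move=> tp ap; apply: (M_form (c := fun m => t * a m + \sum_j W m j) (beta := 1)) => //.
- move=> m l; rewrite /laplacian /degmx !mxE.
  by case: (m == l); rewrite ?mulr1n ?mulr0n; ring.
- move=> l; rewrite mul1r addrK; exact: mulr_gt0.
Qed.

Lemma modif_ok alpha : 0 < alpha < 1 -> transitional_measure W (K_modifPPR W alpha).
Proof.
case/andP => a0 a1.
case: dichot => [ex|tr]; last exact: trivialS.
apply: (M_form (c := fun m => \sum_j W m j) (beta := alpha)) => //.
- by move=> m l; rewrite /degmx !mxE.
- move=> l; have := deg_pos ex l; nra.
Qed.

Lemma PPR_ok alpha : 0 < alpha < 1 -> transitional_measure W (K_PPR W alpha).
Proof.
move=> Ha; have Hm := modif_ok Ha; move: Ha => /andP [a0 a1].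
case: dichot => [ex|tr]; last exact: trivialS.
set D := degmx W; set N := degmx W - alpha *: W.
have dp := deg_pos ex.
have DU : D \in unitmx.
  rewrite unitmxE unitfE det_diag gt_eqF //; apply: prodr_gt0 => i _.
  by rewrite mxE.
have NU : N \in unitmx.
  case: HW => Hsym [Hge0 _].
  apply: (unitM (M := N)).
  - by move=> m l ml; rewrite /N /D /degmx !mxE (negPf ml) mulr0n sub0r oppr_le0 mulr_ge0 // ltW.
  - move=> l; under eq_bigr do rewrite /N /D /degmx !mxE.
    rewrite sumrB (sum_delta (fun m => \sum_j W m j)) -mulr_sumr.
    under eq_bigr do rewrite Hsym.
    have := dp l; set s := \sum_(_ < _) _; have E : \sum_i W i l = s by apply: eq_bigr => i _; exact: Hsym.
    rewrite E; nra.
have HX : 1%:M - alpha *: (invmx D *m W) = invmx D *m N.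
  by rewrite /N mulmxBr mulVmx // -scalemxAr.
have HX1 : (invmx D *m N) *m (invmx N *m D) = 1%:M.
  by rewrite -mulmxA (mulmxA N) mulmxV // mul1mx mulVmx.
have XU : invmx D *m N \in unitmx by rewrite unitmx_mul unitmx_inv DU NU.
have E : K_PPR W alpha = invmx N *m D.
  rewrite /K_PPR HX.
  transitivity (invmx (invmx D *m N) *m ((invmx D *m N) *m (invmx N *m D))).
    by rewrite HX1 mulmx1.
  by rewrite mulmxA mulVmx // mul1mx.
rewrite E /D /degmx mul_mx_diag.
have -> : (\matrix_(i, j) (invmx N i j * (\row_i0 \sum_j0 W i0 j0) 0 j))
   = \matrix_(i, j) (invmx N i j * (fun j => \sum_j0 W j j0) j).
  by apply/matrixP => i j; rewrite !mxE.
by apply: scaleS => // j; exact: dp.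
Qed.

End Inst.

Theorem proposition1 (R : realFieldType) (n : nat) (W : 'M[R]_n) :
  weighted_graph W -> connected_graph W ->
  (forall (t : R) (a : 'I_n -> R), 0 < t -> (forall i, 0 < a i) ->
     transitional_measure W (K_absorp W a t)) /\
  (forall alpha : R, 0 < alpha < 1 -> transitional_measure W (K_PPR W alpha)) /\
  (forall alpha : R, 0 < alpha < 1 -> transitional_measure W (K_modifPPR W alpha)).
Proof.
move=> HW HC; split; [|split].
- by move=> t a tp ap; exact: absorp_ok.
- by move=> alpha Ha; exact: PPR_ok.
- by move=> alpha Ha; exact: modif_ok.
Qed.
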